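(* Let $m_0>0$ be the constant (depending only on $\mu,\Delta_0,\lambda_0$) for which, for every $k\in\mathbb N$, finite interval $\Lambda$, $\ell\in\mathbb N$ and nonempty $S_1,\dots,S_{k+1}\subset\Lambda$ with pairwise distances $\ge2\ell+1$, one has $\mathbb E\|P^\Lambda_{I_{\le k}}\prod_{i}P_-^{S_i}\|\le C_k\max_i\Upsilon_{S_i}|\Lambda|^{2k+1}e^{-m_0\ell}$. Let $\Lambda\subset\mathbb Z$ be a finite interval, $T$ an observable supported on an interval $\mathcal X\subset\Lambda$ with $\|T\|\le1$, $k,\ell\in\mathbb N$, and assume $\operatorname{dist}(\mathcal X,\mathbb Z\setminus\Lambda)>9(k+1)\ell+1$. For $j=1,\dots,k+1$ define $$T_j=T\,P_+^{\partial_{3\ell}[\mathcal X]^\Lambda_{9j\ell}}\prod_{i=1}^{j-1}P_-^{\partial_{3\ell}[\mathcal X]^\Lambda_{9i\ell}}$$ (empty product $=I$). Then $$T_j=P_+^{\partial_{3\ell}[\mathcal X]^\Lambda_{9j\ell}}T_jP_+^{\partial_{3\ell}[\mathcal X]^\Lambda_{9j\ell}}=P_+^{\partial^{out}_{3\ell}[\mathcal X]^\Lambda_{9j\ell}}\otimes P_+^{\partial^{in}_{3\ell}[\mathcal X]^\Lambda_{9j\ell}}\otimes T\prod_{i=1}^{j-1}P_-^{\partial_{3\ell}[\mathcal X]^\Lambda_{9i\ell}},$$ $T_j$ is supported in $[\mathcal X]^\Lambda_{(9j+3)\ell}$, $T\prod_{i=1}^{j-1}P_-^{\partial_{3\ell}[\mathcal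 X]^\Lambda_{9i\ell}}$ is supported in $[\mathcal X]^\Lambda_{(9j-6)\ell}$, and $$\mathbb E\Big\|\Big(T-\sum_{j=1}^{k+1}T_j\Big)_{P^\Lambda_{I_{\le k}}}\Big\|\le C_k|\Lambda|^{2k+1}e^{-m_0\ell}.$$
   Context: Spin chain setup. For $i\in\mathbb Z$ let $\mathcal H_i$ be a copy of $\mathbb C^2$; $\sigma^x,\sigma^y,\sigma^z$ Pauli matrices, $\sigma^\pm=\frac12(\sigma^x\pm i\sigma^y)$, $\mathcal N=\frac12(I-\sigma^z)$, subscript $i$ = action on $\mathcal H_i$. For finite $\Lambda\subset\mathbb Z$, $\mathcal H_\Lambda=\bigotimes_{i\in\Lambda}\mathcal H_i$; operators on $\mathcal H_S$, $S\subset\Lambda$, are identified with $T\otimes I_{\mathcal H_{\Lambda\setminus S}}$, and an observable is supported in $S$ if of this form. $H^\Lambda=\sum_{\{i,i+1\}\subset\Lambda}h_{i,i+1}+\sum_{i\in\Lambda}\mathcal N_i+\lambda\sum_{i\in\Lambda}\omega_i\mathcal N_i$, $h_{i,i+1}=-\mathcal N_i\mathcal N_{i+1}-\frac1{2\Delta}(\sigma_i^+\sigma_{i+1}^-+\sigma_i^-\sigma_{i+1}^+)$, $\Delta>1$, $\lambda>0$, $\{\omega_i\}$ i.i.d. with law $\mu$ absolutely continuous with bounded density, $\{0,1\}\subset\operatorname{supp}\mu\subset[0,1]$; $\mathbb E$ = expectation. Standing: $\Delta\ge\Delta_0>9$, $\lambda\ge\lambda_0>0$; constants depend on $\mu,\Delta_0,\lambda_0,k$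 only. Notation: $P_+^S=\bigotimes_{i\in S}(I-\mathcal N_i)$, $P_-^S=I-P_+^S$. $\Upsilon_S$ = number of maximal subintervals of $S$. $\operatorname{dist}_\Lambda(x,y)=|x-y|$. For $M\subset\Lambda$, $s\in\mathbb N_0$: $[M]^\Lambda_s=\{x\in\Lambda:\operatorname{dist}(x,M)\le s\}$; for $s\in\mathbb N$: $\partial^{out}_sM=[M]^\Lambda_s\setminus M$, $\partial^{in}_sM=\{x\in M:\operatorname{dist}(x,\Lambda\setminus M)\le s\}$, $\partial_sM=\partial^{in}_sM\cup\partial^{out}_sM$. $P^\Lambda_I=\chi_I(H^\Lambda)$, $(T)_Y=YTY^*$, $I_{\le k}=(-\infty,(k+\frac34)(1-\frac1\Delta)]$. *)

(* Defs.v *)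
From HB Require Import structures.
From mathcomp Require Import all_boot all_order all_algebra.
From mathcomp Require Import spectral sesquilinear.
From mathcomp.real_closed Require Import complex.
From mathcomp Require Import all_classical all_reals all_analysis.


Unset Strict Implicit.
Unset Printing Implicit Defensive.

Import Order.TTheory GRing.Theory Num.Theory Num.Def.
Import numFieldNormedType.Exports.
Local Open Scope ring_scope.

(* Sites.  A finite interval Lambda = {a, a+1, ..., a+n-1} of Z is encoded    *)
(* by its left end a : int and its cardinality n.  Subsets of Z are boolean   *)
(* predicates int -> bool.  The Hilbert space H_Lambda = (C^2)^{(x) n} is     *)
(* C^(2^n); the basis vector with index x : 'I_(2^n) has, at site a+j        *)
(* (j < n), the C^2 basis vector e_(bit x j), where bit x j is the j-th      *)
(* binary digit of x.  e_0 = (1,0), e_1 = (0,1) (standard basis of C^2).     *)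

Definition zdist (x y : int) : nat := absz (x - y).

Definition inL (a : int) (n : nat) (x : int) : bool := (a <= x) && (x < a + n%:Z).

(* [M]^Lambda_s = { x in Lambda : dist(x, M) <= s }  (M a subset of Lambda) *)
Definition nbhd (a : int) (n : nat) (M : int -> bool) (s : nat) : int -> bool :=
  fun x => inL a n x && [exists j : 'I_n, M (a + (j : nat)%:Z) && (zdist x (a + (j : nat)%:Z) <= s)%N].

Definition bd_out (a : int) (n : nat) (M : int -> bool) (s : nat) : int -> bool :=
  fun x => nbhd a n M s x && ~~ M x.

Definition bd_in (a : int) (n : nat) (M : int -> bool) (s : nat) : int -> bool :=
  fun x => M x && [exists j : 'I_n, ~~ M (a + (j : nat)%:Z) && (zdist x (a + (j : nat)%:Z) <= s)%N].

Definition bd (a : int) (n : nat) (M : int -> bool) (s : nat) : int -> bool :=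
  fun x => bd_in a n M s x || bd_out a n M s x.

(* Upsilon_S : number of maximal subintervals of S (S a subset of Lambda),   *)
(* counted as the number of left end points of such intervals.              *)
Definition Upsilon (a : int) (n : nat) (S : int -> bool) : nat :=
  #|[set j : 'I_n | S (a + (j : nat)%:Z) && ~~ S (a + (j : nat)%:Z - 1)]|.

Section Ops.
Variable R : realType.
Local Notation C := (R[i]).

Definition bit {N : nat} (x : 'I_N) (j : nat) : bool := odd (x %/ 2 ^ j).

Definition b2o (b : bool) : 'I_2 := inord (nat_of_bool b).

(* the operator A on H_{a+j} (site a+j of Lambda), i.e. A (x) I *)
Definition site_op (n : nat) (j : nat) (A : 'M[C]_2) : 'M[C]_(2 ^ n) :=
  \matrix_(x, y) (A (b2o (bit x j)) (b2o (bit y j)) *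
      ([forall k : 'I_n, ((k : nat) != j) ==> (bit x k == bit y k)])%:R).

Definition sigx : 'M[C]_2 := \matrix_(i, j) (if i == j then 0 else 1).
Definition sigy : 'M[C]_2 :=
  \matrix_(i, j) (if i == j then 0 else if (i : nat) == 0%N then - 'i%C else 'i%C).
Definition sigz : 'M[C]_2 :=
  \matrix_(i, j) (if i == j then (if (i : nat) == 0%N then 1 else -1) else 0).
Definition sigp : 'M[C]_2 := 2%:R^-1 *: (sigx + 'i%C *: sigy).
Definition sigm : 'M[C]_2 := 2%:R^-1 *: (sigx - 'i%C *: sigy).
Definition Nmat : 'M[C]_2 := 2%:R^-1 *: (1%:M - sigz).

Definition Pplus (a : int) (n : nat) (S : int -> bool) : 'M[C]_(2 ^ n) :=
  \prod_(j < n | S (a + (j : nat)%:Z)) site_op n j (1%:M - Nmat).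
Definition Pminus (a : int) (n : nat) (S : int -> bool) : 'M[C]_(2 ^ n) :=
  1%:M - Pplus a n S.

(* T is supported in S: T = T' (x) I_{H_{Lambda \ S}} for some operator T'  *)
(* on H_S; T' is given by its matrix F on the configurations of S (maps     *)
(* from sites to bits, set to false off S).                                 *)
Definition agree_off (a : int) (n : nat) (S : int -> bool) (x y : 'I_(2 ^ n)) : bool :=
  [forall j : 'I_n, ~~ S (a + (j : nat)%:Z) ==> (bit x j == bit y j)].
Definition restr (a : int) (n : nat) (S : int -> bool) (x : 'I_(2 ^ n)) : nat -> bool :=
  fun j => ((j < n)%N && S (a + j%:Z)) && bit x j.
Definition supported (a : int) (n : nat) (S : int -> bool) (T : 'M[C]_(2 ^ n)) : Prop :=
  exists F : (nat -> bool) -> (nat -> bool) -> C,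
    forall x y, T x y = F (restr a n S x) (restr a n S y) * (agree_off a n S x y)%:R.

(* Hamiltonian H^Lambda, with omega_{a+j} = om j *)
Definition hterm (n : nat) (Delta : R) (j : nat) : 'M[C]_(2 ^ n) :=
  - (site_op n j Nmat *m site_op n j.+1 Nmat)
  - (2%:R * Delta)^-1%:C%C *: (site_op n j sigp *m site_op n j.+1 sigm
                                + site_op n j sigm *m site_op n j.+1 sigp).
Definition Ham (n : nat) (Delta lambda : R) (om : nat -> R) : 'M[C]_(2 ^ n) :=
  \sum_(0 <= j < n.-1) hterm n Delta j
  + \sum_(j < n) site_op n j Nmat
  + lambda%:C%C *: \sum_(j < n) (om j)%:C%C *: site_op n j Nmat.

(* Spectral projection chi_{(-oo, c]}(A) for a normal (here Hermitian)       *)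
(* matrix A = P^-1 diag(d) P with P unitary (spectral theorem, spectral.v).  *)
Definition specproj_le {N : nat} (A : 'M[C]_N) (c : R) : 'M[C]_N :=
  invmx (spectralmx A) *m
    diag_mx (\row_i (((spectral_diag A 0 i <= c%:C%C)%R : bool)%:R)) *m spectralmx A.

(* adjoint, (T)_Y = Y T Y^* *)
Definition adj {N : nat} (A : 'M[C]_N) : 'M[C]_N := (map_mx conjC A)^T.
Definition conjby {N : nat} (Y T : 'M[C]_N) : 'M[C]_N := Y *m T *m adj Y.

Definition cabs (z : C) : R := complex.Re `|z|.
Definition vnorm {N : nat} (v : 'cV[C]_N) : R := Num.sqrt (\sum_i cabs (v i 0) ^+ 2).
Definition opnorm {N : nat} (A : 'M[C]_N) : R :=
  sup [set vnorm (A *m v) | v in [set v : 'cV[C]_N | vnorm v <= 1]].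

(* I_{<= k} = (-oo, (k + 3/4)(1 - 1/Delta)] *)
Definition Ik (k : nat) (Delta : R) : R := (k%:R + 3%:R / 4%:R) * (1 - Delta^-1).

(* Expectation over omega_{a}, ..., omega_{a+n-1} i.i.d. with law mu, as an *)
(* iterated integral (nonnegative integrands; = product-measure integral by *)
(* Tonelli).                                                                *)
Fixpoint Eiid (mu : probability R R) (n : nat) (f : (nat -> R) -> \bar R) : \bar R :=
  match n with
  | 0%N => f (fun _ => 0)
  | n'.+1 => (\int[mu]_x Eiid mu n' (fun w => f (fun i => if i == 0%N then x else w i.-1)))%E
  end.

Definition msupp (mu : probability R R) : set R :=
  [set x | forall e : R, 0 < e -> (0 < mu (ball x e))%E].

Definition good_law (mu : probability R R) : Prop :=
  (exists (f : R -> R) (M : R),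
      measurable_fun [set: R] f /\ (forall x, 0 <= f x <= M) /\
      forall A : set R, measurable A ->
        mu A = (\int[lebesgue_measure]_(x in A) (f x)%:E)%E)
  /\ msupp mu 0 /\ msupp mu 1
  /\ (forall x, msupp mu x -> 0 <= x <= 1).

End Ops.

Arguments bit {N} x j.
Arguments site_op {R} n j A.
Arguments sigx {R}. Arguments sigy {R}. Arguments sigz {R}.
Arguments sigp {R}. Arguments sigm {R}. Arguments Nmat {R}.
Arguments Pplus {R} a n S. Arguments Pminus {R} a n S.
Arguments agree_off a n S x y. Arguments restr a n S x _.
Arguments supported {R} a n S T.
Arguments hterm {R} n Delta j. Arguments Ham {R} n Delta lambda om.
Arguments specproj_le {R N} A c. Arguments adj {R N} A. Arguments conjby {R N} Y T.
Arguments cabs {R} z. Arguments vnorm {R N} v. Arguments opnorm {R N} A.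
Arguments Ik {R} k Delta. Arguments Eiid {R} mu n f. Arguments msupp {R} mu _.
Arguments good_law {R} mu.

(* Main.v *)
Require Import Defs.
From HB Require Import structures.
From mathcomp Require Import all_boot all_order all_algebra.
From mathcomp Require Import spectral sesquilinear.
From mathcomp.real_closed Require Import complex.
From mathcomp Require Import all_classical all_reals all_analysis.
From mathcomp Require Import zify.
Import Order.TTheory GRing.Theory Num.Theory Num.Def.
Import numFieldNormedType.Exports.
Local Open Scope ring_scope.


Lemma bit_inj_nat n (x y : nat) : (x < 2 ^ n)%N -> (y < 2 ^ n)%N ->
  (forall k, (k < n)%N -> odd (x %/ 2 ^ k) = odd (y %/ 2 ^ k)) -> x = y.
Proof.
elim: n x y => [|n IH] x y.
  by rewrite expn0 !ltnS !leqn0 => /eqP -> /eqP ->.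
move=> hx hy hb.
rewrite (divn_eq x 2) (divn_eq y 2) !modn2.
have h0 := hb 0%N isT; rewrite !expn0 !divn1 in h0.
rewrite h0; congr (_ * _ + _)%N.
apply: IH.
- by rewrite ltn_divLR // -expnSr.
- by rewrite ltn_divLR // -expnSr.
move=> k hk; have := hb k.+1; rewrite ltnS => /(_ hk).
by rewrite !expnS !divnMA.
Qed.

Lemma bit_inj n (x y : 'I_(2 ^ n)) :
  (forall k : 'I_n, bit x k = bit y k) -> x = y.
Proof.
move=> h; apply/val_inj/(@bit_inj_nat n); rewrite ?ltn_ord //.
by move=> k kn; have := h (Ordinal kn).
Qed.

Section S1.
Variable R : realType.
Local Notation C := (R[i]).

Lemma Emat_E (i j : 'I_2) :
  (1%:M - @Nmat R) i j = ((i == j) && ((i : nat) == 0%N))%:R.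
Proof.
rewrite /Nmat /sigz !mxE.
case: i => [[|[|i]] hi] //; case: j => [[|[|j]] hj] //=; rewrite ?mulr1n ?mulr0n.
- by rewrite subrr mulr0 subr0.
- by rewrite subrr mulr0 subr0.
- by rewrite subrr mulr0 subr0.
- have -> : (1 - - 1 : C) = 2%:R by rewrite opprK.
  by rewrite mulVf ?subrr // pnatr_eq0.
Qed.

Lemma b2o_inj : injective b2o.
Proof. by move=> [] [] //; rewrite /b2o => /(congr1 val); rewrite /= !inordK. Qed.

Lemma site_opE n j :
  site_op n j (1%:M - @Nmat R) = diag_mx (\row_x (~~ bit x j)%:R).
Proof.
apply/matrixP => x y; rewrite /site_op [LHS]mxE Emat_E !mxE.
have [<-|nxy] := eqVneq x y.
  rewrite eqxx /= mulr1n.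
  have -> : [forall k : 'I_n, ((k : nat) != j) ==> (bit x k == bit x k)].
    by apply/forallP => k; rewrite eqxx implybT.
  rewrite mulr1; congr (_ %:R); case: (bit x j) => //=.
  by rewrite /b2o /= inordK.
  by rewrite /b2o /= inordK.
rewrite mulr0n.
have [hb|hb] := eqVneq (bit x j) (bit y j).
  case: forallP => hf; last by rewrite mulr0.
  case/negP: nxy; apply/eqP/bit_inj => k.
  have [kj|kj] := eqVneq (k : nat) j; first by rewrite kj.
  by move: (hf k); rewrite kj /= => /eqP.
have -> : (b2o (bit x j) == b2o (bit y j)) = false.
  by apply/negbTE; apply: contra hb => /eqP /b2o_inj ->.
by rewrite /= mul0r.
Qed.
End S1.

Section S2.
Variable R : realType.
Local Notation C := (R[i]).

Lemma prod_bdiag N (I : Type) (r : seq I) (P : pred I) (f : I -> 'I_N -> bool) :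
  \prod_(j <- r | P j) diag_mx (\row_x (f j x)%:R : 'rV[C]_N)
  = diag_mx (\row_x (all (fun j => P j ==> f j x) r)%:R).
Proof.
elim: r => [|i r IH].
  rewrite big_nil; apply/matrixP => x y; rewrite !mxE /=.
  by case: (x == y).
rewrite big_cons /=; case: (P i) => //=.
rewrite IH -mulmxE mulmx_diag; congr diag_mx; apply/rowP => x; rewrite !mxE.
by rewrite -natrM mulnb.
Qed.

Lemma Pplus_diag a n B :
  Pplus a n B = diag_mx (\row_x [forall j : 'I_n, B (a + (j : nat)%:Z) ==> ~~ bit x j]%:R : 'rV[C]_(2 ^ n)).
Proof.
rewrite /Pplus (eq_bigr (fun j : 'I_n => diag_mx (\row_x (~~ bit x j)%:R))); last first.
  by move=> j _; rewrite site_opE.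
rewrite prod_bdiag; congr diag_mx; apply/rowP => x; rewrite !mxE.
congr (_ %:R); congr nat_of_bool; apply/idP/idP => [/allP h|/forallP h].
  by apply/forallP => j; apply: h; rewrite mem_index_enum.
by apply/allP => j _; apply: h.
Qed.
End S2.

Section S3.
Variable R : realType.
Local Notation C := (R[i]).
Variables (a : int) (n : nat).
Local Notation M := ('M[C]_(2 ^ n)).
Implicit Types (S X : int -> bool).

Definition bdiag (S : int -> bool) (A : M) := exists g : (nat -> bool) -> bool,
  A = diag_mx (\row_x (g (restr a n S x))%:R).

Lemma restrE S (x : 'I_(2 ^ n)) (j : 'I_n) : S (a + (j : nat)%:Z) -> restr a n S x j = bit x j.
Proof. by move=> h; rewrite /restr ltn_ord h. Qed.

Lemma bdiag_Pplus S (B : int -> bool) : (forall j : 'I_n, B (a + (j : nat)%:Z) -> S (a + (j : nat)%:Z)) ->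
  bdiag S (Pplus a n B).
Proof.
move=> hBS; exists (fun r => [forall j : 'I_n, B (a + (j : nat)%:Z) ==> ~~ r j]).
rewrite Pplus_diag; congr diag_mx; apply/rowP => x; rewrite !mxE.
congr (_ %:R); congr nat_of_bool; apply: eq_forallb => j.
by case hB: (B _) => //=; rewrite restrE // hBS.
Qed.

Lemma bdiag1 S : bdiag S 1%:M.
Proof.
exists (fun _ => true); apply/matrixP => x y; rewrite !mxE.
by case: (x == y).
Qed.

Lemma bdiagM S A B : bdiag S A -> bdiag S B -> bdiag S (A *m B).
Proof.
move=> [f ->] [g ->]; exists (fun r => f r && g r).
rewrite mulmx_diag; congr diag_mx; apply/rowP => x; rewrite !mxE.
by rewrite -natrM mulnb.
Qed.

Lemma bdiagB S A : bdiag S A -> bdiag S (1%:M - A).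
Proof.
move=> [f ->]; exists (fun r => ~~ f r).
rewrite -diag_const_mx -raddfB /=; congr diag_mx; apply/rowP => x; rewrite !mxE.
by case: (f _); rewrite ?subrr ?subr0.
Qed.

Lemma bdiag_prod S (I : Type) (r : seq I) (P : pred I) (F : I -> M) :
  (forall i, P i -> bdiag S (F i)) -> bdiag S (\prod_(i <- r | P i) F i).
Proof.
move=> h; apply: big_ind => //; first exact: bdiag1.
by move=> A B hA hB; rewrite -mulmxE; apply: bdiagM.
Qed.

Lemma bdiag_comm (S1 S2 : int -> bool) A B : bdiag S1 A -> bdiag S2 B -> A *m B = B *m A.
Proof.
move=> [f ->] [g ->]; rewrite !mulmx_diag; congr diag_mx; apply/rowP => x.
by rewrite !mxE mulrC.
Qed.

Lemma bdiag_idem S A : bdiag S A -> A *m A = A.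
Proof.
move=> [f ->]; rewrite mulmx_diag; congr diag_mx; apply/rowP => x.
by rewrite !mxE -natrM mulnb andbb.
Qed.

Lemma bdiag_adj S A : bdiag S A -> adj A = A.
Proof.
move=> [f ->]; apply/matrixP => x y; rewrite /adj !mxE.
case: eqP => [->|nyx]; case: eqP.
- by move=> _; rewrite !mulr1n; case: (f _); rewrite /= ?conjC0 ?conjC1.
- by move=> /(_ erefl).
- by move=> e; case: nyx.
- by move=> _; rewrite !mulr0n conjC0.
Qed.

Lemma bdiag_mono S (S' : int -> bool) A : (forall j : 'I_n, S (a + (j : nat)%:Z) -> S' (a + (j : nat)%:Z)) ->
  bdiag S A -> bdiag S' A.
Proof.
move=> hS [f ->]; exists (fun r => f (fun j => r j && S (a + j%:Z))).
congr diag_mx; apply/rowP => x; rewrite !mxE; congr (_ %:R); congr nat_of_bool; congr f.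
apply/funext => j; rewrite /restr.
case: (ltnP j n) => hj /=; last by rewrite ?andbF.
case hSj: (S _); rewrite ?andbF //.
by rewrite (hS (Ordinal hj) hSj) andbT.
Qed.

Lemma comm_supp X S T A : supported a n X T -> bdiag S A ->
  (forall j : 'I_n, S (a + (j : nat)%:Z) -> ~~ X (a + (j : nat)%:Z)) -> T *m A = A *m T.
Proof.
move=> [F hF] [g ->] hSX; rewrite mul_mx_diag mul_diag_mx; apply/matrixP => x y.
rewrite !mxE hF.
case hag: (agree_off a n X x y); last by rewrite !mulr0 mul0r.
suff -> : restr a n S x = restr a n S y by rewrite mulrC.
apply/funext => j; rewrite /restr.
case: (ltnP j n) => hj /=; last by [].
case hSj: (S _) => //=.
move/forallP: hag => /(_ (Ordinal hj)) /=.
by rewrite (hSX (Ordinal hj) hSj) => /eqP.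
Qed.

Lemma supp_mul X S T A : supported a n X T -> bdiag S A ->
  (forall j : 'I_n, X (a + (j : nat)%:Z) -> S (a + (j : nat)%:Z)) ->
  supported a n S (T *m A).
Proof.
move=> [F hF] [g ->] hXS.
pose pr (r : nat -> bool) := fun j : nat => r j && X (a + j%:Z).
pose Q (r1 r2 : nat -> bool) :=
  [forall j : 'I_n, (S (a + (j : nat)%:Z) && ~~ X (a + (j : nat)%:Z)) ==> (r1 j == r2 j)].
exists (fun r1 r2 => F (pr r1) (pr r2) * (Q r1 r2 && g r2)%:R).
move=> x y; rewrite mul_mx_diag !mxE hF.
have prE z : pr (restr a n S z) = restr a n X z.
  apply/funext => j; rewrite /pr /restr.
  case: (ltnP j n) => hj /=; last by [].
  case hXj: (X _); rewrite ?andbF //.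
  by rewrite (hXS (Ordinal hj) hXj) andbT.
rewrite !prE -mulrA -mulrA; congr (_ * _).
rewrite -!natrM !mulnb; congr (_ %:R); congr nat_of_bool.
have -> : agree_off a n X x y = agree_off a n S x y && Q (restr a n S x) (restr a n S y).
  apply/forallP/andP => [h|[/forallP h1 /forallP h2] j].
    split; apply/forallP => j.
      apply/implyP => hS; have := h j; rewrite implybE.
      case hX: (X _) => /=; first by rewrite (hXS j hX) in hS.
      by [].
    apply/implyP => /andP [hS hX]; rewrite !restrE //.
    by have := h j; rewrite hX.
  apply/implyP => hX.
  case hS: (S (a + (j : nat)%:Z)).
    by have := h2 j; rewrite hS hX /= !restrE.
  by have := h1 j; rewrite hS.
by rewrite [in RHS]andbC andbA.
Qed.
End S3.

Section S4.
Variable R : realType.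
Local Notation C := (R[i]).

Lemma Pplus_split a n (M : int -> bool) t :
  Pplus a n (bd a n M t) = Pplus a n (bd_out a n M t) *m Pplus a n (bd_in a n M t) :> 'M[C]_(2 ^ n).
Proof.
rewrite !Pplus_diag mulmx_diag; congr diag_mx; apply/rowP => x; rewrite !mxE.
rewrite -natrM mulnb; congr (_ %:R); congr nat_of_bool.
apply/forallP/andP => [h|[/forallP h1 /forallP h2] j].
  by split; apply/forallP => j; apply/implyP => hj; have := h j; rewrite /bd hj ?orbT.
by rewrite /bd; case/boolP: (bd_in _ _ _ _ _) => hi /=; [apply: (implyP (h2 j))|apply: h1].
Qed.

Lemma Pplus_none a n (B : int -> bool) : (forall x, B x = false) ->
  Pplus a n B = 1%:M :> 'M[C]_(2 ^ n).
Proof.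
move=> hB; rewrite Pplus_diag; apply/matrixP => x y; rewrite !mxE.
have -> : [forall j : 'I_n, B (a + (j : nat)%:Z) ==> ~~ bit x j].
  by apply/forallP => j; rewrite hB.
by [].
Qed.
End S4.


Section K.
Variables (a : int) (n : nat).

Lemma inL_idx z : inL a n z -> exists j : 'I_n, z = a + (j : nat)%:Z.
Proof.
rewrite /inL => /andP [h1 h2].
have hj : (absz (z - a) < n)%N by lia.
by exists (Ordinal hj) => /=; lia.
Qed.

Lemma nbhd_le (p q : int) (M : int -> bool) s x :
  (forall y, M y -> (p <= y) && (y <= q)) ->
  nbhd a n M s x -> [&& inL a n x, p - s%:Z <= x & x <= q + s%:Z].
Proof.
move=> hM /andP [hx /existsP [j /andP [hMj hd]]].
move: (hM _ hMj); rewrite /zdist in hd; rewrite hx /=.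
lia.
Qed.

Lemma nbhd_ge (p q : int) (M : int -> bool) s x :
  (forall y, (p <= y) && (y <= q) -> M y) -> (forall y, (p <= y) && (y <= q) -> inL a n y) ->
  p <= q -> [&& inL a n x, p - s%:Z <= x & x <= q + s%:Z] -> nbhd a n M s x.
Proof.
move=> hM hL hpq /and3P [hx h1 h2]; rewrite /nbhd hx /=.
pose z := if x < p then p else if q < x then q else x.
have hz : (p <= z) && (z <= q) by rewrite /z; case: ifP => h; [|case: ifP => h']; lia.
have [j hj] := inL_idx _ (hL _ hz).
apply/existsP; exists j; rewrite -hj hM //= /zdist.
move: hz; rewrite /z; case: ifP => h; [|case: ifP => h']; lia.
Qed.

Lemma bd_le (p q : int) (M : int -> bool) t x :
  (forall y, M y = (p <= y) && (y <= q)) -> (forall y, (p <= y) && (y <= q) -> inL a n y) ->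
  bd a n M t x -> [&& inL a n x, p - t%:Z <= x, x <= q + t%:Z &
                   (x <= p + t%:Z - 1) || (q - t%:Z + 1 <= x)].
Proof.
move=> hM hL /orP [/andP [hMx /existsP [j /andP [hMj hd]]]|/andP [hN hMx]].
  have hxL : inL a n x by apply: hL; rewrite -hM.
  rewrite hxL /=.
  move: hMx hMj hd; rewrite !hM /zdist; lia.
have := @nbhd_le p q M t x.
have hb : forall y, M y -> (p <= y) && (y <= q) by move=> y; rewrite hM.
move=> /(_ hb hN) /and3P [-> h1 h2]; rewrite h1 h2 /=.
move: hMx; rewrite hM; lia.
Qed.

Lemma bd_ge (p q : int) (M : int -> bool) t x :
  (forall y, M y = (p <= y) && (y <= q)) -> (forall y, (p - 1 <= y) && (y <= q + 1) -> inL a n y) ->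
  p <= q -> (0 < t)%N ->
  [&& inL a n x, p - t%:Z <= x, x <= q + t%:Z & (x <= p + t%:Z - 1) || (q - t%:Z + 1 <= x)] ->
  bd a n M t x.
Proof.
move=> hM hL hpq ht /and4P [hx h1 h2 h3].
have [hMx|hMx] := boolP (M x).
  apply/orP; left; rewrite /bd_in hMx /=.
  move: hMx; rewrite hM => hMx.
  have [hle|hge] := boolP (x <= p + t%:Z - 1).
    have [j hj] := inL_idx (p - 1) (hL (p - 1) ltac:(lia)).
    apply/existsP; exists j; rewrite -hj hM /zdist; lia.
  have [j hj] := inL_idx (q + 1) (hL (q + 1) ltac:(lia)).
  apply/existsP; exists j; rewrite -hj hM /zdist; lia.
apply/orP; right; rewrite /bd_out hMx andbT.
apply: (@nbhd_ge p q) => //.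
- by move=> y; rewrite hM.
- by move=> y hy; apply: hL; lia.
by rewrite hx h1 h2.
Qed.
End K.

Section L.
Variables (a : int) (n k l : nat) (b c : int).
Let Xp := fun x : int => (b <= x) && (x <= c).
Hypothesis hl : (0 < l)%N.
Hypothesis hXL : forall x, Xp x -> inL a n x.
Hypothesis hd : forall x y, Xp x -> ~~ inL a n y -> (9 * k.+1 * l + 1 < zdist x y)%N.

Lemma LamE (hbc : b <= c) y :
  b - (9 * k.+1 * l + 1)%N%:Z <= y -> y <= c + (9 * k.+1 * l + 1)%N%:Z -> inL a n y.
Proof.
move=> h1 h2; apply/negPn/negP => hy.
have hyX : ~~ Xp y by apply: contra hy; apply: hXL.
move: hyX; rewrite {1}/Xp => hyX.
have hb := hd b y ltac:(rewrite /Xp; lia) hy.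
have hc := hd c y ltac:(rewrite /Xp; lia) hy.
move: hb hc hyX; rewrite /zdist; lia.
Qed.

Lemma NbE (hbc : b <= c) j : (j <= k.+1)%N -> forall x,
  nbhd a n Xp (9 * j * l) x = (b - (9 * j * l)%N%:Z <= x) && (x <= c + (9 * j * l)%N%:Z).
Proof.
move=> hj x.
have hjl : (9 * j * l <= 9 * k.+1 * l)%N by apply: leq_mul => //; apply: leq_mul.
apply/idP/idP.
  by move/(@nbhd_le a n b c Xp) => /(_ (fun y h => h)) /and3P [_ -> ->].
move=> h; apply: (@nbhd_ge a n b c) => //.
by rewrite h andbT; apply: LamE; lia.
Qed.

Lemma nbhd_empty (hcb : c < b) s x : nbhd a n Xp s x = false.
Proof.
apply/negbTE/negP => /andP [_ /existsP [j /andP [h _]]]; move: h; rewrite /Xp; lia.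
Qed.

Lemma bd_empty (hcb : c < b) s t x : bd a n (nbhd a n Xp s) t x = false.
Proof.
rewrite /bd /bd_in /bd_out nbhd_empty //=.
apply/negbTE/negP => /andP [/andP [_ /existsP [j /andP [h _]]] _]; move: h.
by rewrite nbhd_empty.
Qed.

Definition bdj j := bd a n (nbhd a n Xp (9 * j * l)) (3 * l).

Lemma bdE (hbc : b <= c) j : (1 <= j <= k.+1)%N -> forall x,
  bdj j x = [&& inL a n x, b - (9 * j * l)%N%:Z - (3 * l)%N%:Z <= x,
                 x <= c + (9 * j * l)%N%:Z + (3 * l)%N%:Z &
                 (x <= b - (9 * j * l)%N%:Z + (3 * l)%N%:Z - 1) ||
                 (c + (9 * j * l)%N%:Z - (3 * l)%N%:Z + 1 <= x)].
Proof.
move=> /andP [hj1 hj] x.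
have hjl : (9 * j * l <= 9 * k.+1 * l)%N by apply: leq_mul => //; apply: leq_mul.
have hM := NbE hbc j hj.
apply/idP/idP.
  move/(@bd_le a n _ _ _ _ _ hM); apply.
  by move=> y hy; apply: LamE; lia.
move=> h; apply: (@bd_ge a n _ _ _ _ _ hM) => //.
- by move=> y hy; apply: LamE; lia.
- lia.
- lia.
Qed.

Lemma bd_notX j : (1 <= j <= k.+1)%N -> forall x, bdj j x -> ~~ Xp x.
Proof.
move=> hj x; have [hbc|hcb] := leP b c; last by rewrite /bdj bd_empty.
have h9 : (9 * l <= 9 * j * l)%N by case/andP: hj => ? ?; nia.
rewrite bdE // /Xp; lia.
Qed.

Lemma bd_in_range j : (1 <= j <= k.+1)%N -> forall x, bdj j x ->
  [&& inL a n x, b - (9 * j * l + 3 * l)%N%:Z <= x & x <= c + (9 * j * l + 3 * l)%N%:Z].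
Proof.
move=> hj x; have [hbc|hcb] := leP b c; last by rewrite /bdj bd_empty.
rewrite bdE //; lia.
Qed.

Lemma bd_far i i' : (1 <= i)%N -> (i < i')%N -> (i' <= k.+1)%N -> forall x y,
  bdj i x -> bdj i' y -> (2 * l + 1 <= zdist x y)%N.
Proof.
move=> hi hii hi' x y; have [hbc|hcb] := leP b c; last by rewrite /bdj bd_empty.
have h9 : (9 * i * l + 9 * l <= 9 * i' * l)%N.
  nia.
rewrite !bdE ?hi ?hi' ?(ltnW hii) ?(leq_trans hi (ltnW hii)) //=.
  rewrite /zdist; lia.
by apply: leq_trans hi' ; apply: ltnW.
Qed.

Lemma bd_nonempty (hbc : b <= c) j : (1 <= j <= k.+1)%N -> bdj j (b - (9 * j * l)%N%:Z - 1).
Proof.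
move=> hj; have hjl : (9 * j * l <= 9 * k.+1 * l)%N by case/andP: hj => ? ?; nia.
rewrite bdE // (LamE hbc); lia.
Qed.

Lemma card_pt (v : int) : (#|[set j : 'I_n | (a + (j : nat)%:Z)%R == v]| <= 1)%N.
Proof.
apply/card_le1_eqP => x y; rewrite !inE => /eqP hx /eqP hy.
apply/val_inj => /=; lia.
Qed.

Lemma Ups_bd j : (1 <= j <= k.+1)%N -> (Upsilon a n (bdj j) <= 3)%N.
Proof.
move=> hj; have [hbc|hcb] := leP b c; last first.
  rewrite /Upsilon (_ : [set _ | _] = finset.set0) ?cards0 //.
  by apply/setP => x; rewrite !inE /bdj bd_empty.
pose v1 := a; pose v2 := b - (9 * j * l)%N%:Z - (3 * l)%N%:Z;
pose v3 := c + (9 * j * l)%N%:Z - (3 * l)%N%:Z + 1.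
apply: (@leq_trans #|[set j : 'I_n | a + (j : nat)%:Z == v1] :|:
   [set j : 'I_n | a + (j : nat)%:Z == v2] :|: [set j : 'I_n | a + (j : nat)%:Z == v3]|).
  apply: subset_leq_card; apply/fintype.subsetP => x; rewrite !inE !bdE // => /andP [h1 h2].
  move: h1 h2; rewrite /inL /v1 /v2 /v3; lia.
apply: leq_trans (leq_card_setU _ _).1 _.
rewrite (_ : 3 = 2 + 1)%N //; apply: leq_add (card_pt _).
apply: leq_trans (leq_card_setU _ _).1 _.
by apply: leq_add (card_pt _) (card_pt _).
Qed.

Lemma X_sub s x : Xp x -> nbhd a n Xp s x.
Proof.
move=> hx; apply: (@nbhd_ge a n b c) => //; first by move: hx; rewrite /Xp; lia.
rewrite hXL //=; move: hx; rewrite /Xp; lia.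
Qed.

Lemma bd_sub i s : (1 <= i <= k.+1)%N -> (9 * i * l + 3 * l <= s)%N ->
  forall x, bdj i x -> nbhd a n Xp s x.
Proof.
move=> hi hs x hx; have [hbc|hcb] := leP b c; last by move: hx; rewrite /bdj bd_empty.
have := bd_in_range i hi x hx => /and3P [h1 h2 h3].
apply: (@nbhd_ge a n b c) => //; rewrite h1 /=; lia.
Qed.
End L.


Section N.
Variable R : realType.
Local Notation C := (R[i]).

Lemma cabsE (z : C) : `|z| = (cabs z)%:C%C.
Proof. by rewrite /cabs normc_def. Qed.

Lemma cabs_ge0 (z : C) : 0 <= cabs z.
Proof. by rewrite -ler0c -cabsE normr_ge0. Qed.

Lemma cabsM (z w : C) : cabs (z * w) = cabs z * cabs w.
Proof. by apply: complexI; rewrite rmorphM -!cabsE normrM. Qed.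

Lemma cabs_sum {I : finType} (f : I -> C) : cabs (\sum_i f i) <= \sum_i cabs (f i).
Proof.
have h : `|\sum_i f i| <= \sum_i `|f i| := ler_norm_sum _ _ _.
have e : \sum_i `|f i| = (\sum_i cabs (f i))%:C%C.
  by rewrite rmorph_sum; apply: eq_bigr => i _; rewrite cabsE.
by rewrite -lecR -cabsE -e.
Qed.

Lemma cabs_eq0 (z : C) : cabs z = 0 -> z = 0.
Proof. by move=> h; apply/eqP; rewrite -normr_eq0 cabsE h. Qed.

Lemma cabs_nat (m : nat) : cabs (m%:R : C) = m%:R.
Proof. by apply: complexI; rewrite -cabsE normr_nat rmorph_nat. Qed.

Lemma RC_sum (I : finType) (F : I -> R) : ((\sum_i F i)%:C%C : C) = \sum_i (F i)%:C%C.
Proof. by rewrite rmorph_sum. Qed.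
Lemma RC_X (x : R) : ((x ^+ 2)%:C%C : C) = (x%:C%C) ^+ 2.
Proof. by rewrite rmorphXn. Qed.

Definition vn2 {N} (v : 'cV[C]_N) := \sum_i cabs (v i 0) ^+ 2.

Lemma vn2_ge0 {N} (v : 'cV[C]_N) : 0 <= vn2 v.
Proof. by apply: sumr_ge0 => i _; rewrite exprn_ge0 // cabs_ge0. Qed.

Lemma vn2C {N} (v : 'cV[C]_N) : (vn2 v)%:C%C = ((map_mx conjC v)^T *m v) 0 0.
Proof.
rewrite /vn2 RC_sum !mxE; apply: eq_bigr => i _.
by rewrite RC_X -cabsE normCK !mxE mulrC.
Qed.

Lemma vnorm_unitary {N} (U : 'M[C]_N) (v : 'cV[C]_N) :
  (map_mx conjC U)^T *m U = 1%:M -> vnorm (U *m v) = vnorm v.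
Proof.
move=> hU; rewrite /vnorm; congr Num.sqrt.
apply: complexI; rewrite -/(vn2 _) -/(vn2 _) !vn2C.
by rewrite map_mxM trmx_mul -mulmxA (mulmxA _ U) hU mul1mx.
Qed.

Lemma vnorm_ge0 {N} (v : 'cV[C]_N) : 0 <= vnorm v.
Proof. exact: sqrtr_ge0. Qed.

Lemma vnorm_eq0 {N} (v : 'cV[C]_N) : vnorm v = 0 -> v = 0.
Proof.
move/eqP; rewrite sqrtr_eq0 => h.
have h0 : vn2 v = 0 by apply/eqP; rewrite eq_le h vn2_ge0.
apply/matrixP => i j; rewrite ord1 mxE.
have := psumr_eq0P (fun i _ => exprn_ge0 2 (cabs_ge0 (v i 0))) h0 => /(_ i isT).
by move/eqP; rewrite expf_eq0 /= => /eqP /cabs_eq0.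
Qed.

Lemma vnormZ {N} (c : C) (v : 'cV[C]_N) : vnorm (c *: v) = cabs c * vnorm v.
Proof.
rewrite /vnorm -(ger0_norm (cabs_ge0 c)) -sqrtr_sqr -sqrtrM ?exprn_ge0 ?cabs_ge0 //.
congr Num.sqrt; rewrite mulr_sumr; apply: eq_bigr => i _.
by rewrite mxE cabsM exprMn.
Qed.

Lemma cabs_le_vnorm {N} (v : 'cV[C]_N) j : cabs (v j 0) <= vnorm v.
Proof.
rewrite -(ger0_norm (cabs_ge0 _)) -sqrtr_sqr ler_sqrt ?vn2_ge0 //.
rewrite /vn2 (bigD1 j) //= lerDl.
by apply: sumr_ge0 => i _; rewrite exprn_ge0 // cabs_ge0.
Qed.

Lemma vnorm_le_sum {N} (v : 'cV[C]_N) : vnorm v <= \sum_i cabs (v i 0).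
Proof.
set S := \sum_i _.
have hS : 0 <= S by apply: sumr_ge0 => i _; apply: cabs_ge0.
rewrite /vnorm -(ger0_norm hS) -sqrtr_sqr ler_sqrt ?exprn_ge0 //.
rewrite expr2 /vn2 mulr_suml; apply: ler_sum => i _.
rewrite expr2 ler_wpM2l ?cabs_ge0 //.
rewrite /S (bigD1 i) //= lerDl.
by apply: sumr_ge0 => j _; apply: cabs_ge0.
Qed.

Lemma vnorm_diag {N} (d : 'rV[C]_N) (v : 'cV[C]_N) :
  (forall i, cabs (d 0 i) <= 1) -> vnorm (diag_mx d *m v) <= vnorm v.
Proof.
move=> hd; rewrite /vnorm ler_sqrt ?vn2_ge0 //; apply: ler_sum => i _.
rewrite mul_diag_mx mxE cabsM exprMn ler_piMl ?exprn_ge0 ?cabs_ge0 //.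
by rewrite exprn_ile1 ?cabs_ge0.
Qed.

Definition Kb {N} (A : 'M[C]_N) := \sum_i \sum_j cabs (A i j).

Lemma vnorm_bound {N} (A : 'M[C]_N) (v : 'cV[C]_N) : vnorm v <= 1 -> vnorm (A *m v) <= Kb A.
Proof.
move=> hv; apply: le_trans (vnorm_le_sum _) _; apply: ler_sum => i _.
rewrite mxE; apply: le_trans (cabs_sum _) _; apply: ler_sum => j _.
rewrite cabsM ler_piMr ?cabs_ge0 //.
exact: le_trans (cabs_le_vnorm _ _) hv.
Qed.

Definition vset {N} (A : 'M[C]_N) :=
  image [set v : 'cV[C]_N | vnorm v <= 1] (fun v => vnorm (A *m v)).

Lemma vset_sup {N} (A : 'M[C]_N) : has_sup (vset A).
Proof.
split.
  exists (vnorm (A *m 0)); exists 0 => //=.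
  by rewrite /vnorm /vn2 big1 ?sqrtr0 // => i _; rewrite mxE /cabs normr0 expr0n.
by exists (Kb A) => _ [v hv <-]; apply: vnorm_bound.
Qed.

Lemma opnorm_ub {N} (A : 'M[C]_N) v : vnorm v <= 1 -> vnorm (A *m v) <= opnorm A.
Proof.
move=> hv; apply: (sup_upper_bound (vset_sup A)).
by exists v.
Qed.

Lemma opnorm_le {N} (A : 'M[C]_N) r :
  (forall v, vnorm v <= 1 -> vnorm (A *m v) <= r) -> opnorm A <= r.
Proof.
move=> h; apply: ge_sup; first by case: (vset_sup A).
by move=> _ [v hv <-]; apply: h.
Qed.

Lemma vnorm0 {N} : vnorm (0 : 'cV[C]_N) = 0.
Proof. by rewrite /vnorm /vn2 big1 ?sqrtr0 // => i _; rewrite mxE /cabs normr0 expr0n. Qed.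

Lemma opnorm_ge0 {N} (A : 'M[C]_N) : 0 <= opnorm A.
Proof.
have h := @opnorm_ub N A 0; rewrite mulmx0 vnorm0 in h; apply: h.
exact: ler01.
Qed.

Lemma opnorm_vec {N} (A : 'M[C]_N) v : vnorm (A *m v) <= opnorm A * vnorm v.
Proof.
have [h0|hn] := eqVneq (vnorm v) 0.
  by rewrite h0 (vnorm_eq0 _ h0) mulmx0 mulr0 vnorm0.
have hp : 0 < vnorm v by rewrite lt_neqAle eq_sym hn vnorm_ge0.
pose w := ((vnorm v)^-1)%:C%C *: v.
have hc : cabs (((vnorm v)^-1)%:C%C : C) = (vnorm v)^-1.
  apply: complexI; rewrite -cabsE ger0_norm // ler0c invr_ge0 vnorm_ge0 //.
have hw : vnorm w <= 1 by rewrite /w vnormZ hc mulVf.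
have := opnorm_ub A w hw; rewrite /w -scalemxAr vnormZ hc.
by rewrite ler_pdivrMl // mulrC.
Qed.
End N.


Section P.
Variable R : realType.
Local Notation C := (R[i]).

Lemma specproj_props {N} (H : 'M[C]_N) (c : R) :
  adj (specproj_le H c) = specproj_le H c /\
  forall v, vnorm (specproj_le H c *m v) <= vnorm v.
Proof.
set U := spectralmx H.
have hU : U \is unitarymx by apply: spectral_unitarymx.
have Uu : U \in unitmx by apply: unitarymx_unit.
set W := invmx U.
have hW : W = map_mx conjC (U^T) by rewrite /W invmx_unitary.
have WU : W *m U = 1%:M by rewrite mulVmx.
have UW : U *m W = 1%:M by rewrite mulmxV.
have cW : (map_mx conjC W)^T = U.
  rewrite hW -map_mx_comp map_mx_id ?trmxK // => z /=; exact: conjCK.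
have cU : (map_mx conjC U)^T = W by rewrite hW map_trmx.
rewrite /specproj_le -/U -/W.
set D := diag_mx _.
have cD : (map_mx conjC D)^T = D.
  rewrite /D map_diag_mx tr_diag_mx; congr diag_mx; apply/rowP => i; rewrite !mxE.
  by case: (spectral_diag _ _ _ <= _)%R; rewrite /= ?rmorph0 ?rmorph1.
split.
  rewrite /adj !map_mxM !trmx_mul cW cD cU.
  by rewrite mulmxA.
move=> v; rewrite -!mulmxA.
rewrite vnorm_unitary ?cU //.
have h1 : vnorm (D *m (U *m v)) <= vnorm (U *m v).
  apply: vnorm_diag => i; rewrite mxE.
  by case: (spectral_diag _ _ _ <= _)%R; rewrite ?cabs_nat ?ler01 ?lexx.
apply: le_trans h1 _; first by rewrite vnorm_unitary // cU.
by rewrite cW.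
Qed.
End P.


Section E.
Variable R : realType.
Variable mu : probability R R.
Local Open Scope ereal_scope.

Lemma int_mono (f g : R -> \bar R) : (forall x, 0 <= f x) -> (forall x, f x <= g x) ->
  \int[mu]_x f x <= \int[mu]_x g x.
Proof.
move=> f0 fg; have g0 : forall x, 0 <= g x by move=> x; apply: le_trans (fg x).
rewrite !ge0_integralE //.
apply: ge_ereal_sup => _ [h hf <-]; apply: ereal_sup_ubound; exists h => //= x.
apply: le_trans (hf x) _; rewrite /patch /=; case: ifP => // _.
Qed.

Lemma Eiid_ge0 n (f : (nat -> R) -> \bar R) : (forall w, 0 <= f w) -> 0 <= Eiid mu n f.
Proof.
elim: n f => [|n IH] f f0 /=; first exact: f0.
by apply: integral_ge0 => x _; apply: IH => w; apply: f0.
Qed.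

Lemma Eiid_mono n (f g : (nat -> R) -> \bar R) : (forall w, 0 <= f w) ->
  (forall w, f w <= g w) -> Eiid mu n f <= Eiid mu n g.
Proof.
elim: n f g => [|n IH] f g f0 fg /=; first exact: fg.
apply: int_mono.
  by move=> x; apply: Eiid_ge0 => w; apply: f0.
by move=> x; apply: IH => w; [apply: f0|apply: fg].
Qed.

Lemma Eiid0 n : Eiid mu n (fun _ => 0) = 0.
Proof.
elim: n => [|n IH] //=.
by rewrite (eq_integral (fun _ => 0)) ?integral0 // => x _; rewrite IH.
Qed.
End E.

Theorem lemma3p3 (R : realType) (mu : probability R R) (Delta0 lambda0 m0 : R) :
  good_law mu -> 9 < Delta0 -> 0 < lambda0 -> 0 < m0 ->
  (* m0 is a constant for which the bound of the previous lemma holds *)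
  (exists Cp : nat -> R, forall k : nat, (0 < k)%N ->
     forall Delta lambda : R, Delta0 <= Delta -> lambda0 <= lambda ->
     forall (a : int) (n : nat) (l : nat), (0 < l)%N ->
     forall S : 'I_k.+1 -> (int -> bool),
       (forall i x, S i x -> inL a n x) ->
       (forall i, exists x, S i x) ->
       (forall i i', i != i' -> forall x y, S i x -> S i' y ->
          (2 * l + 1 <= zdist x y)%N) ->
       (Eiid mu n (fun om =>
          (opnorm (specproj_le (Ham n Delta lambda om) (Ik k Delta)
                    *m \prod_(i < k.+1) Pminus a n (S i)))%:E)
        <= (Cp k * ((\max_(i < k.+1) Upsilon a n (S i))%N)%:R
              * n%:R ^+ (2 * k + 1) * expR (- (m0 * l%:R)))%:E)%E) ->
  forall k : nat, (0 < k)%N -> exists Ck : R,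
  forall Delta lambda : R, Delta0 <= Delta -> lambda0 <= lambda ->
  forall (a : int) (n : nat) (b c : int) (T : 'M[R[i]]_(2 ^ n)) (l : nat),
  (0 < l)%N ->
  let X := fun x : int => (b <= x) && (x <= c) in
  (forall x, X x -> inL a n x) ->
  supported a n X T -> opnorm T <= 1 ->
  (forall x y, X x -> ~~ inL a n y -> (9 * k.+1 * l + 1 < zdist x y)%N) ->
  let Nb := fun j : nat => nbhd a n X (9 * j * l) in
  let Pm := fun j : nat => \prod_(1 <= i < j) Pminus a n (bd a n (Nb i) (3 * l)) in
  let Tj := fun j : nat => T *m Pplus a n (bd a n (Nb j) (3 * l)) *m Pm j in
  (forall j : nat, (1 <= j <= k.+1)%N ->
     [/\ Tj j = Pplus a n (bd a n (Nb j) (3 * l)) *m Tj j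
                  *m Pplus a n (bd a n (Nb j) (3 * l)),
         Tj j = Pplus a n (bd_out a n (Nb j) (3 * l))
                  *m Pplus a n (bd_in a n (Nb j) (3 * l)) *m (T *m Pm j),
         supported a n (nbhd a n X ((9 * j + 3) * l)) (Tj j) &
         supported a n (nbhd a n X ((9 * j - 6) * l)) (T *m Pm j)])
  /\ (Eiid mu n (fun om =>
        (opnorm (conjby (specproj_le (Ham n Delta lambda om) (Ik k Delta))
                        (T - \sum_(1 <= j < k.+2) Tj j)))%:E)
      <= (Ck * n%:R ^+ (2 * k + 1) * expR (- (m0 * l%:R)))%:E)%E.
Proof.
move=> hgood hD9 hl0 hm0 [Cp hCp] k hk.
exists (3%:R * `|Cp k|).
move=> Delta lambda hDel hlam a n b c T l hl X hXL hsupp hT hdist Nb Pm Tj.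
pose B := bdj a n l b c.
have nX := @bd_notX a n k l b c hl hXL hdist.
have inr := @bd_in_range a n k l b c hl hXL hdist.
have far := @bd_far a n k l b c hl hXL hdist.
have nonE := @bd_nonempty a n k l b c hl hXL hdist.
have ups := @Ups_bd a n k l b c hl hXL hdist.
have Xs := @X_sub a n l b c hl hXL.
have bsub := @bd_sub a n k l b c hl hXL hdist.
have hB : forall j, bd a n (Nb j) (3 * l) = B j by [].
have PmE : forall j, Pm j = \prod_(1 <= i < j) Pminus a n (B i) by [].
have TjE : forall j, Tj j = T *m Pplus a n (B j) *m Pm j by [].
have bdP : forall i, (1 <= i <= k.+1)%N -> bdiag R a n (fun x => ~~ X x) (Pplus a n (B i)).
  move=> i hi; apply: bdiag_Pplus => j; exact: nX i hi _.
have bdPT : forall i, bdiag R a n (fun _ => true) (Pplus a n (B i)).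
  by move=> i; apply: bdiag_Pplus.
have bdPmT : forall j, bdiag R a n (fun _ => true) (Pm j).
  move=> j; rewrite PmE; apply: bdiag_prod => i _; apply: bdiagB; exact: bdPT.
have bdPm : forall j, (j <= k.+2)%N -> bdiag R a n (fun x => ~~ X x) (Pm j).
  move=> j hj; rewrite PmE big_seq; apply: bdiag_prod => i; rewrite mem_index_iota => hi.
  apply: bdiagB; apply: bdP; lia.
have bdPmS : forall j s, (j <= k.+2)%N -> (forall i, (1 <= i < j)%N -> (9 * i * l + 3 * l <= s)%N) ->
    bdiag R a n (nbhd a n X s) (Pm j).
  move=> j s hj hs; rewrite PmE big_seq; apply: bdiag_prod => i; rewrite mem_index_iota => hi.
  apply: bdiagB; apply: bdiag_Pplus => x; apply: (bsub i s _ (hs _ hi)).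
  lia.
have commT : forall A, bdiag R a n (fun x => ~~ X x) A -> T *m A = A *m T.
  by move=> A hA; apply: (@comm_supp R a n X _ T A hsupp hA (fun j h => h)).
split.
  move=> j hj.
  have hj2 : (j <= k.+2)%N by case/andP: hj => _ h; apply: leq_trans h _.
  have hPj := bdP j hj.
  have cPP : Pplus a n (B j) *m Pm j = Pm j *m Pplus a n (B j) :=
    @bdiag_comm R a n _ _ _ _ (bdPT j) (bdPmT j).
  have idem := @bdiag_idem R a n _ _ hPj.
  have cT := commT _ hPj.
  split.
  - rewrite TjE hB.
    rewrite -!mulmxA -cPP (mulmxA (Pplus a n (B j)) (Pplus a n (B j))) idem.
    by rewrite [RHS]mulmxA -cT -[RHS]mulmxA (mulmxA (Pplus a n (B j)) (Pplus a n (B j))) idem.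
  - have sp : Pplus a n (B j) = Pplus a n (bd_out a n (Nb j) (3 * l))
        *m Pplus a n (bd_in a n (Nb j) (3 * l)) := Pplus_split _ _ _ _ _.
    by rewrite TjE -sp cT mulmxA.
  - rewrite TjE -mulmxA; apply: (@supp_mul R a n X _ T _ hsupp); last first.
      by move=> x hx; apply: Xs.
    apply: bdiagM.
      apply: bdiag_Pplus => x hx; apply: (bsub j) hx => //.
      by rewrite mulnDl.
    apply: bdPmS => // i hi.
    rewrite mulnDl; nia.
  - apply: (@supp_mul R a n X _ T _ hsupp); last by move=> x hx; apply: Xs.
    apply: bdPmS => // i hi.
    case/andP: hj => hj1 _; nia.
have tele : forall m, (1 <= m)%N -> \sum_(1 <= j < m) Tj j = T - T *m Pm m.
  elim=> // m IH hm.
  have [->|hm0'] := eqVneq m 0%N.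
    rewrite big_geq // PmE big_geq // -idmxE mulmx1 subrr //.
  have hm1 : (1 <= m)%N by rewrite lt0n.
  rewrite big_nat_recr //= IH // TjE !PmE big_nat_recr //= -PmE.
  rewrite /Pminus -mulmxE mulmxBr mulmx1 mulmxBr.
  rewrite -(mulmxA T (Pplus a n (B m))) (@bdiag_comm R a n _ _ _ _ (bdPT m) (bdPmT m)).
  by rewrite mulmxA opprB addrA [LHS]addrAC.
have XmE : T - \sum_(1 <= j < k.+2) Tj j = T *m Pm k.+2.
  by rewrite tele // opprB addrCA subrr addr0.
have QE : Pm k.+2 = \prod_(i < k.+1) Pminus a n (B i.+1).
  by rewrite PmE big_add1 /= big_mkord.
have hQT : bdiag R a n (fun x => ~~ X x) (Pm k.+2) := bdPm _ (leqnn _).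
have key : forall om,
  opnorm (conjby (specproj_le (Ham n Delta lambda om) (Ik k Delta))
                 (T - \sum_(1 <= j < k.+2) Tj j))
  <= opnorm (specproj_le (Ham n Delta lambda om) (Ik k Delta) *m Pm k.+2).
  move=> om; set Pr := specproj_le _ _.
  have [hadj hPv] := @specproj_props R _ (Ham n Delta lambda om) (Ik k Delta).
  rewrite XmE /conjby -/Pr hadj (commT _ hQT).
  apply: (@opnorm_le R) => v hv.
  have e : Pr *m (Pm k.+2 *m T) *m Pr *m v = (Pr *m Pm k.+2) *m (T *m (Pr *m v)) by rewrite !mulmxA.
  rewrite e.
  apply: le_trans (@opnorm_vec R _ _ _) _.
  rewrite -[X in _ <= X]mulr1; apply: ler_wpM2l; first exact: opnorm_ge0.
  apply: le_trans (@opnorm_vec R _ _ _) _.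
  rewrite -(mulr1 1); apply: ler_pM => //; [exact: opnorm_ge0|exact: vnorm_ge0|].
  exact: le_trans (hPv v) hv.
have hCk0 : 0 <= 3%:R * `|Cp k| * n%:R ^+ (2 * k + 1) * expR (- (m0 * l%:R)).
  by rewrite !mulr_ge0 ?expR_ge0 ?exprn_ge0 ?ler0n ?normr_ge0.
have [hbc|hcb] := leP b c; last first.
  have B1 : forall x, B 1%N x = false := fun x => @bd_empty a n l b c hl hcb _ _ x.
  have Q0 : Pm k.+2 = 0.
    by rewrite PmE big_ltn // /Pminus Pplus_none // subrr mul0r.
  apply: le_trans (@Eiid_mono R mu n _ (fun _ => 0%E) _ _) _.
  - by move=> w; rewrite lee_fin; apply: opnorm_ge0.
  - move=> w; rewrite lee_fin; apply: le_trans (key w) _; rewrite Q0 mulmx0.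
    by apply: (@opnorm_le R) => v _; rewrite mul0mx vnorm0.
  by rewrite Eiid0 lee_fin.
pose S := fun i : 'I_k.+1 => B i.+1.
have hSi : forall i : 'I_k.+1, (0 < i.+1 <= k.+1)%N by move=> i; rewrite /= ltn_ord.
have hS1 : forall i x, S i x -> inL a n x.
  by move=> i x hx; have /and3P [] := inr _ (hSi i) x hx.
have hS2 : forall i, exists x, S i x.
  by move=> i; eexists; apply: nonE hbc _ (hSi i).
have hS3 : forall i i', i != i' -> forall x y, S i x -> S i' y -> (2 * l + 1 <= zdist x y)%N.
  move=> i i' hii x y hx hy.
  have [hlt|hgt|heq] := ltngtP i i'.
  - by apply: (far i.+1 i'.+1) hx hy => //; rewrite ltn_ord.
  - have -> : zdist x y = zdist y x by rewrite /zdist; lia.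
    by apply: (far i'.+1 i.+1) hy hx => //; rewrite ltn_ord.
  - by move: hii; rewrite (val_inj heq) eqxx.
have hE := hCp k hk Delta lambda hDel hlam a n l hl S hS1 hS2 hS3.
apply: le_trans (@Eiid_mono R mu n _ (fun om => (opnorm (specproj_le (Ham n Delta lambda om)
   (Ik k Delta) *m \prod_(i < k.+1) Pminus a n (S i)))%:E) _ _) _.
- by move=> w; rewrite lee_fin; apply: opnorm_ge0.
- by move=> w; rewrite lee_fin -QE; apply: key.
apply: le_trans hE _; rewrite lee_fin.
have hU : ((\max_(i < k.+1) Upsilon a n (S i))%N <= 3)%N.
  by apply/bigmax_leqP => i _; apply: ups (hSi i).
apply: ler_wpM2r; first exact: expR_ge0.
apply: ler_wpM2r; first by rewrite exprn_ge0 // ler0n.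
apply: (@le_trans _ _ (`|Cp k| * ((\max_(i < k.+1) Upsilon a n (S i))%N)%:R)).
  by apply: ler_wpM2r; [rewrite ler0n|apply: ler_norm].
by rewrite mulrC; apply: ler_wpM2r; [apply: normr_ge0|rewrite ler_nat].
Qed.
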